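(* Let $s\in\mathbb R$, $p,q\in(0,+\infty]$ and $\mathcal C\in b^{s,q}_p$. Then $\delta_{\mathcal C}(x)\le \frac dp-s$ for every $x\in\mathbb R^d$, and for every $\gamma\in[-s,-s+\frac dp]$, $$\dim_H\{x\in\mathbb R^d:\ \delta_{\mathcal C}(x)\ge\gamma\}\le d-sp-\gamma p,$$ where $\dim_H$ denotes Hausdorff dimension.
   Context: Fix integers $d\ge1$, $N\ge1$ and bounded functions $\psi^{(1)},\dots,\psi^{(N)}:\mathbb R^d\to\mathbb C$ with fast decay (for every $n>0$ there is $C_n$ with $|\psi^{(i)}(x)|\le C_n(1+|x|)^{-n}$). The associated wavelet system is $\psi^{(i)}_{j,k}(x)=\psi^{(i)}(2^jx-k)$, $1\le i\le N$, $j\ge0$, $k\in\mathbb Z^d$. For $j\ge0$ and $k\in\mathbb Z^d$, $\lambda_{j,k}=\prod_{m=1}^d[k_m2^{-j},(k_m+1)2^{-j})$ is the dyadic cube of generation (scale) $j$; coefficients and wavelets are indexed indifferently by $(i,j,k)$ or by $(i,\lambda)$ with $\lambda=\lambda_{j,k}$, and $\Lambda_j$ denotes the set of pairs $(i,\lambda)$ with $\lambda$ of generation $j$. A sequence is a family $\mathcal C=(c^{(i)}_{j,k})$ of complex numbers. For $\gamma\in\mathbb R$, $x\in\mathbb R^d$, $\mathcal C\in D^\gamma(x)$ means there exist $C>0$ and indices $(i_n,j_n,k_n)$ with $j_n\to+\infty$ and $|c^{(i_n)}_{j_n,k_n}\psi^{(i_n)}_{j_n,k_n}(x)|\ge C2^{\gamma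 j_n}$; the divergence exponent is $\delta_{\mathcal C}(x)=\sup\{\gamma:\mathcal C\in D^\gamma(x)\}$. For $s\in\mathbb R$, $p,q\in(0,\infty]$, the sequence space $b^{s,q}_p$ consists of sequences such that $\varepsilon_j:=\big(\sum_{(i,\lambda)\in\Lambda_j}|c^{(i)}_\lambda 2^{(s-d/p)j}|^p\big)^{1/p}$ (a supremum over $\Lambda_j$ if $p=\infty$) satisfies $(\varepsilon_j)_{j\ge0}\in\ell^q$; it carries the (quasi-)norm $\|(\varepsilon_j)_j\|_{\ell^q}$. *)

(* Defs.v *)
From Stdlib Require Fin.
From Stdlib Require Import Reals Lra ZArith List.
Open Scope R_scope.

Inductive Rbar : Type := Finite (r : R) | p_infty | m_infty.

Definition Rbar_le (a b : Rbar) : Prop :=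
  match a, b with
  | m_infty, _ => True
  | _, p_infty => True
  | Finite x, Finite y => x <= y
  | _, _ => False
  end.

Definition is_sup_Rbar (P : R -> Prop) (v : Rbar) : Prop :=
  (forall g, P g -> Rbar_le (Finite g) v) /\
  (forall w, (forall g, P g -> Rbar_le (Finite g) w) -> Rbar_le v w).

Definition is_inf_Rbar (P : R -> Prop) (v : Rbar) : Prop :=
  (forall g, P g -> Rbar_le v (Finite g)) /\
  (forall w, (forall g, P g -> Rbar_le w (Finite g)) -> Rbar_le w v).

Inductive ext : Type := ext_fin (r : R) | ext_inf.
Definition ext_pos (p : ext) : Prop :=
  match p with ext_fin r => 0 < r | ext_inf => True end.
(* d / p, with d / oo = 0 *)
Definition d_over (d : nat) (p : ext) : R :=
  match p with ext_fin r => INR d / r | ext_inf => 0 end.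

(* x ^ y for x >= 0, y > 0 (with 0 ^ y = 0) *)
Definition pw (x y : R) : R := if Rle_dec x 0 then 0 else Rpower x y.

Definition CC := (R * R)%type.
Definition Cmod (z : CC) : R := sqrt (fst z ^ 2 + snd z ^ 2).
Definition Cmult (z w : CC) : CC :=
  (fst z * fst w - snd z * snd w, fst z * snd w + snd z * fst w).

Fixpoint sumFin (d : nat) : (Fin.t d -> R) -> R :=
  match d return (Fin.t d -> R) -> R with
  | O => fun _ => 0
  | S d' => fun f => f Fin.F1 + sumFin d' (fun i => f (Fin.FS i))
  end.

Definition Rd (d : nat) := Fin.t d -> R.
Definition Zd (d : nat) := Fin.t d -> Z.
Definition Rd_norm {d : nat} (x : Rd d) : R := sqrt (sumFin d (fun m => x m ^ 2)).
Definition Rd_dist {d : nat} (x y : Rd d) : R :=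
  sqrt (sumFin d (fun m => (x m - y m) ^ 2)).

(* Wavelets psi^{(i)} indexed by i = 0..N-1 (paper: 1..N) *)
Definition wavelets (d : nat) := nat -> Rd d -> CC.

Definition wav {d : nat} (psi : wavelets d) (i j : nat) (k : Zd d) (x : Rd d) : CC :=
  psi i (fun m => 2 ^ j * x m - IZR (k m)).

Definition bounded_wavelets {d : nat} (N : nat) (psi : wavelets d) : Prop :=
  exists B, forall i x, (i < N)%nat -> Cmod (psi i x) <= B.

Definition fast_decay {d : nat} (N : nat) (psi : wavelets d) : Prop :=
  forall n : nat, (0 < n)%nat -> exists Cn, forall i (x : Rd d), (i < N)%nat ->
    Cmod (psi i x) <= Cn / (1 + Rd_norm x) ^ n.

Definition wseq (d : nat) := nat -> nat -> Zd d -> CC.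

Definition in_D {d : nat} (N : nat) (psi : wavelets d) (c : wseq d)
    (gamma : R) (x : Rd d) : Prop :=
  exists (C : R) (iN jN : nat -> nat) (kN : nat -> Zd d),
    0 < C /\
    (forall n, (iN n < N)%nat) /\
    (forall M : nat, exists n0, forall n, (n0 <= n)%nat -> (M <= jN n)%nat) /\
    (forall n, Cmod (Cmult (c (iN n) (jN n) (kN n)) (wav psi (iN n) (jN n) (kN n) x))
               >= C * Rpower 2 (gamma * INR (jN n))).

Definition is_div_exp {d : nat} (N : nat) (psi : wavelets d) (c : wseq d)
    (x : Rd d) (v : Rbar) : Prop :=
  is_sup_Rbar (fun gamma => in_D N psi c gamma x) v.

Definition level_psum {d : nat} (c : wseq d) (s r : R) (j : nat)
    (L : list (nat * Zd d)) : R :=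
  fold_right (fun ik acc =>
     pw (Cmod (c (fst ik) j (snd ik)) * Rpower 2 ((s - INR d / r) * INR j)) r + acc) 0 L.

Definition is_eps_level {d : nat} (N : nat) (c : wseq d) (s : R) (p : ext)
    (j : nat) (e : R) : Prop :=
  match p with
  | ext_fin r =>
      exists S : R,
        is_sup_Rbar (fun v => exists L : list (nat * Zd d),
                        NoDup L /\ Forall (fun ik => (fst ik < N)%nat) L /\
                        v = level_psum c s r j L) (Finite S)
        /\ e = pw S (1 / r)
  | ext_inf =>
      is_sup_Rbar (fun v => exists i (k : Zd d), (i < N)%nat /\
                        v = Cmod (c i j k) * Rpower 2 (s * INR j)) (Finite e)
  end.

Definition in_lq (q : ext) (e : nat -> R) : Prop :=
  match q with
  | ext_fin r => exists M, forall n, sum_f_R0 (fun j => pw (e j) r) n <= M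
  | ext_inf => exists M, forall j, e j <= M
  end.

Definition in_besov {d : nat} (N : nat) (s : R) (p q : ext) (c : wseq d) : Prop :=
  exists e : nat -> R, (forall j, is_eps_level N c s p j (e j)) /\ in_lq q e.

Definition H_null {d : nat} (t : R) (E : Rd d -> Prop) : Prop :=
  forall delta eps, 0 < delta -> 0 < eps ->
    exists (U : nat -> Rd d -> Prop) (r : nat -> R),
      (forall x, E x -> exists n, U n x) /\
      (forall n, 0 <= r n <= delta) /\
      (forall n x y, U n x -> U n y -> Rd_dist x y <= r n) /\
      (forall M, sum_f_R0 (fun n => pw (r n) t) M <= eps).

Definition is_Hdim {d : nat} (E : Rd d -> Prop) (D : Rbar) : Prop :=
  is_inf_Rbar (fun t => 0 < t /\ H_null t E) D.

(* the bound d - s p - gamma p (equal to d when p = +oo, where gamma = -s) *)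
Definition dim_bound (d : nat) (s : R) (p : ext) (gamma : R) : R :=
  match p with ext_fin r => INR d - s * r - gamma * r | ext_inf => INR d end.

(* Main.v *)
Require Import Defs.
From Stdlib Require Import Reals Lra Lia ZArith List Classical ClassicalEpsilon FunctionalExtensionality.
Open Scope R_scope.

Lemma Cmod_nonneg z : 0 <= Cmod z.
Proof. unfold Cmod; apply sqrt_pos. Qed.

Lemma Cmod_mult z w : Cmod (Cmult z w) = Cmod z * Cmod w.
Proof.
  destruct z as [a b], w as [c e]; unfold Cmod, Cmult; simpl.
  rewrite <- sqrt_mult by nra. f_equal. ring.
Qed.

Lemma sumFin_le d (f g : Fin.t d -> R) : (forall m, f m <= g m) -> sumFin d f <= sumFin d g.
Proof.
  induction d; simpl; intros H; [lra|].
  specialize (IHd (fun i => f (Fin.FS i)) (fun i => g (Fin.FS i))).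
  pose proof (H Fin.F1). assert (sumFin d (fun i => f (Fin.FS i)) <= sumFin d (fun i => g (Fin.FS i))) by (apply IHd; intros; apply H). lra.
Qed.

Lemma sumFin_const d c : sumFin d (fun _ => c) = INR d * c.
Proof. induction d; simpl sumFin; [simpl; ring|]. rewrite IHd, S_INR. ring. Qed.

Lemma sumFin_nonneg d (f : Fin.t d -> R) : (forall m, 0 <= f m) -> 0 <= sumFin d f.
Proof. intros H. pose proof (sumFin_le d (fun _ => 0) f H). rewrite sumFin_const in H0. lra. Qed.

Lemma sumFin_ge_term d (f : Fin.t d -> R) : (forall m, 0 <= f m) -> forall m, f m <= sumFin d f.
Proof.
  induction d; intros H m. { inversion m. }
  revert H IHd. pattern m. apply Fin.caseS'.
  - intros H _. simpl. pose proof (sumFin_nonneg d (fun i => f (Fin.FS i)) (fun i => H (Fin.FS i))). lra.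
  - intros p H IH. simpl. pose proof (IH (fun i => f (Fin.FS i)) (fun i => H (Fin.FS i)) p). pose proof (H Fin.F1). lra.
Qed.

Lemma coord_le_norm d (x : Rd d) m : Rabs (x m) <= Rd_norm x.
Proof.
  unfold Rd_norm. rewrite <- sqrt_Rsqr_abs. apply sqrt_le_1_alt.
  unfold Rsqr. replace (x m * x m) with (x m ^ 2) by ring.
  apply (sumFin_ge_term d (fun m => x m ^ 2)). intros; nra.
Qed.

Lemma Rd_norm_nonneg d (x : Rd d) : 0 <= Rd_norm x.
Proof. unfold Rd_norm; apply sqrt_pos. Qed.

Lemma dist_cube d (x y : Rd d) w : 0 <= w -> (forall m, Rabs (x m - y m) <= w) ->
  Rd_dist x y <= sqrt (INR d) * w.
Proof.
  intros Hw H. unfold Rd_dist. rewrite <- (sqrt_square w) by lra.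
  rewrite <- sqrt_mult by (try apply pos_INR; nra). apply sqrt_le_1_alt.
  rewrite <- sumFin_const. apply sumFin_le. intros m. specialize (H m).
  assert (0 <= Rabs (x m - y m)) by apply Rabs_pos.
  rewrite <- pow2_abs. nra.
Qed.

Lemma p2_pos y : 0 < Rpower 2 y.
Proof. unfold Rpower. apply exp_pos. Qed.

Lemma nat_above x : exists n : nat, x < INR n.
Proof.
  destruct (archimed x) as [H1 _].
  destruct (Z_le_gt_dec 0 (up x)) as [Hz|Hz].
  - exists (Z.to_nat (up x)). rewrite INR_IZR_INZ, Z2Nat.id by lia. lra.
  - exists 0%nat. apply Z.gt_lt in Hz. apply IZR_lt in Hz. simpl. lra.
Qed.

Lemma ln2_pos : 0 < ln 2.
Proof. rewrite <- ln_1; apply ln_increasing; lra. Qed.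

Lemma p2_grow a K : 0 < a -> exists J : nat, forall j : nat, (J <= j)%nat -> K < Rpower 2 (a * INR j).
Proof.
  intros Ha. pose proof ln2_pos as Hl.
  destruct (nat_above (K / (a * ln 2))) as [J HJ]. exists J. intros j Hj.
  unfold Rpower. assert (Hx := exp_ineq1_le (a * INR j * ln 2)).
  apply le_INR in Hj.
  assert (K / (a * ln 2) < INR j) by lra.
  assert (K < a * ln 2 * INR j).
  { apply (Rmult_lt_compat_l (a * ln 2)) in H; [|nra].
    field_simplify in H; [|lra]. nra. }
  nra.
Qed.

Lemma Rpower_pos x y : 0 < Rpower x y.
Proof. unfold Rpower. apply exp_pos. Qed.

Lemma pw_nonneg x y : 0 <= pw x y.
Proof. unfold pw. destruct (Rle_dec x 0); [lra|]. apply Rlt_le, Rpower_pos. Qed.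

Lemma pw_pos x y : 0 < x -> pw x y = Rpower x y.
Proof. intros H. unfold pw. destruct (Rle_dec x 0); [lra|reflexivity]. Qed.

Lemma pw_mono a b y : 0 < y -> 0 <= a <= b -> pw a y <= pw b y.
Proof.
  intros Hy Hab. unfold pw. destruct (Rle_dec a 0). { destruct (Rle_dec b 0); [lra|apply Rlt_le, Rpower_pos]. }
  destruct (Rle_dec b 0); [lra|]. apply Rle_Rpower_l; lra.
Qed.

Lemma Rpower_inv_cancel x u : 0 < x -> 0 < u -> Rpower (Rpower x u) (/ u) = x.
Proof. intros Hx Hu. rewrite Rpower_mult. replace (u * / u) with 1 by (field; lra). apply Rpower_1; auto. Qed.

Lemma pw_le_inv u x M : 0 < u -> pw x u <= M -> x <= Rpower (Rabs M + 1) (/ u).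
Proof.
  intros Hu H. destruct (Rle_dec x 0). { pose proof (Rpower_pos (Rabs M + 1) (/u)). lra. }
  rewrite pw_pos in H by lra. rewrite <- (Rpower_inv_cancel x u) by lra.
  apply Rle_Rpower_l. { left; apply Rinv_0_lt_compat; auto. }
  split; [apply Rpower_pos|]. pose proof (Rle_abs M). lra.
Qed.

Lemma p2_plus a b : Rpower 2 (a + b) = Rpower 2 a * Rpower 2 b.
Proof. apply Rpower_plus. Qed.

Lemma p2_pow c j : Rpower 2 (c * INR j) = (Rpower 2 c) ^ j.
Proof. rewrite <- Rpower_mult. apply Rpower_pow. apply Rpower_pos. Qed.

Lemma sum_ge_last f j : (forall n, 0 <= f n) -> f j <= sum_f_R0 f j.
Proof.
  intros H. destruct j; simpl; [lra|]. pose proof (cond_pos_sum f j H). lra.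
Qed.

Lemma lq_bound q e : ext_pos q -> in_lq q e -> exists E0, forall j, e j <= E0.
Proof.
  destruct q as [r|]; simpl; intros Hq [M HM].
  - exists (Rpower (Rabs M + 1) (/ r)). intros j. apply pw_le_inv; auto.
    eapply Rle_trans; [|apply (HM j)]. apply (sum_ge_last (fun j => pw (e j) r)). intros; apply pw_nonneg.
  - exists M; auto.
Qed.

Lemma p2_cancel x u K : x * Rpower 2 u <= K -> x <= K * Rpower 2 (- u).
Proof.
  intros H. replace x with (x * Rpower 2 u * Rpower 2 (-u)).
  - apply Rmult_le_compat_r; [apply Rlt_le, Rpower_pos|auto].
  - rewrite Rmult_assoc, <- p2_plus. replace (u + - u) with 0 by ring. rewrite Rpower_O; lra.
Qed.

Lemma besov_sum_bound d N s r q (c : wseq d) : ext_pos q -> 0 < r ->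
  in_besov N s (ext_fin r) q c -> exists M', forall j L, NoDup L ->
   Forall (fun ik => (fst ik < N)%nat) L -> level_psum c s r j L <= M'.
Proof.
  intros Hq Hr [e [He Hlq]]. destruct (lq_bound q e Hq Hlq) as [E0 HE0].
  exists (Rpower (Rabs E0 + 1) (/ (1 / r))). intros j L HL HF.
  destruct (He j) as [S [[Hs1 _] HeS]].
  assert (HS : S <= Rpower (Rabs E0 + 1) (/ (1 / r))).
  { apply pw_le_inv. apply Rdiv_lt_0_compat; lra. rewrite <- HeS. apply HE0. }
  assert (level_psum c s r j L <= S). { apply (Hs1 (level_psum c s r j L)). exists L; auto. }
  lra.
Qed.

Lemma coef_bound d N s p q (c : wseq d) : (1 <= N)%nat -> ext_pos p -> ext_pos q ->
  in_besov N s p q c -> exists K0, 0 < K0 /\ forall i j k, (i < N)%nat ->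
  Cmod (c i j k) <= K0 * Rpower 2 ((d_over d p - s) * INR j).
Proof.
  intros HN Hp Hq Hb. destruct p as [r|].
  - simpl in Hp. destruct (besov_sum_bound d N s r q c Hq Hp Hb) as [M' HM].
    exists (Rpower (Rabs M' + 1) (/ r)). split; [apply Rpower_pos|]. intros i j k Hi.
    specialize (HM j ((i,k)::nil)). simpl in HM.
    assert (H1 : pw (Cmod (c i j k) * Rpower 2 ((s - INR d / r) * INR j)) r + 0 <= M').
    { apply HM. constructor; [simpl; tauto|constructor]. constructor; [simpl; auto|constructor]. }
    assert (H2 := pw_le_inv r (Cmod (c i j k) * Rpower 2 ((s - INR d / r) * INR j)) M' Hp ltac:(lra)).
    apply p2_cancel in H2. simpl d_over. replace ((INR d / r - s) * INR j) with (- ((s - INR d / r) * INR j)) by ring. auto.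
  - destruct Hb as [e [He Hlq]]. destruct (lq_bound q e Hq Hlq) as [E0 HE0].
    exists (Rabs E0 + 1). split; [pose proof (Rabs_pos E0); lra|]. intros i j k Hi.
    destruct (He j) as [Hs1 _].
    assert (H1 : Cmod (c i j k) * Rpower 2 (s * INR j) <= e j).
    { apply (Hs1 _). exists i, k. auto. }
    simpl d_over. replace ((0 - s) * INR j) with (- (s * INR j)) by ring. apply p2_cancel.
    pose proof (HE0 j). pose proof (Rle_abs E0). lra.
Qed.

Lemma inD_bound d N (psi : wavelets d) (c : wseq d) a K0 Bw g x :
  0 < K0 -> 0 <= Bw ->
  (forall i j k, (i < N)%nat -> Cmod (c i j k) <= K0 * Rpower 2 (a * INR j)) ->
  (forall i y, (i < N)%nat -> Cmod (psi i y) <= Bw) ->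
  in_D N psi c g x -> g <= a.
Proof.
  intros HK HB Hc Hpsi [C [iN [jN [kN [HC [Hi [Hj Hge]]]]]]].
  destruct (Rle_or_lt g a) as [|Hga]; auto. exfalso.
  destruct (p2_grow (g - a) (K0 * Bw / C) ltac:(lra)) as [J HJ].
  destruct (Hj J) as [n0 Hn0]. specialize (Hn0 n0 (le_n _)).
  specialize (HJ _ Hn0). set (n := n0) in *. specialize (Hge n).
  rewrite Cmod_mult in Hge. unfold wav in Hge.
  pose proof (Hc (iN n) (jN n) (kN n) (Hi n)) as H1.
  pose proof (Hpsi (iN n) (fun m => 2 ^ jN n * x m - IZR (kN n m)) (Hi n)) as H2.
  pose proof (Cmod_nonneg (c (iN n) (jN n) (kN n))).
  pose proof (Cmod_nonneg (psi (iN n) (fun m => 2 ^ jN n * x m - IZR (kN n m)))).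
  assert (Hg : Rpower 2 (g * INR (jN n)) = Rpower 2 ((g - a) * INR (jN n)) * Rpower 2 (a * INR (jN n))).
  { rewrite <- p2_plus. f_equal. ring. }
  rewrite Hg in Hge.
  pose proof (Rpower_pos 2 (a * INR (jN n))). pose proof (Rpower_pos 2 ((g - a) * INR (jN n))).
  assert (K0 * Bw < C * Rpower 2 ((g - a) * INR (jN n))).
  { apply (Rmult_lt_compat_l C) in HJ; [|lra]. field_simplify in HJ; lra. }
  assert (Cmod (c (iN n) (jN n) (kN n)) * Cmod (psi (iN n) (fun m => 2 ^ jN n * x m - IZR (kN n m))) <= K0 * Rpower 2 (a * INR (jN n)) * Bw).
  { apply Rmult_le_compat; auto. }
  nra.
Qed.

Lemma sup_le (P : R -> Prop) v b : is_sup_Rbar P v -> (forall g, P g -> g <= b) -> Rbar_le v (Finite b).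
Proof. intros [_ H2] H. apply H2. intros g Hg. simpl. auto. Qed.

Definition blk {d} (Ls : nat -> list (Rd d)) (j : nat) : list (option (Rd d * nat)) :=
  None :: map (fun y => Some (y, j)) (Ls j).

Fixpoint flat {d} (Ls : nat -> list (Rd d)) (J0 n : nat) : list (option (Rd d * nat)) :=
  match n with
  | O => blk Ls J0
  | S n' => flat Ls J0 n' ++ blk Ls (J0 + S n')
  end.

Lemma flat_len {d} Ls J0 n : (S n <= length (@flat d Ls J0 n))%nat.
Proof.
  induction n; simpl. { unfold blk; simpl; lia. }
  rewrite length_app. unfold blk; simpl. lia.
Qed.

Lemma flat_prefix {d} Ls J0 n n' : (n <= n')%nat -> exists l, @flat d Ls J0 n' = flat Ls J0 n ++ l.
Proof.
  induction 1. { exists nil. rewrite app_nil_r. auto. }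
  destruct IHle as [l Hl]. exists (l ++ blk Ls (J0 + S m)). simpl. rewrite Hl, app_assoc. auto.
Qed.

Lemma flat_stable {d} Ls J0 n m : (m < length (@flat d Ls J0 n))%nat ->
  nth m (flat Ls J0 m) None = nth m (flat Ls J0 n) None.
Proof.
  intros H. destruct (le_lt_dec m n) as [Hmn|Hmn].
  - destruct (flat_prefix Ls J0 m n Hmn) as [l Hl]. rewrite Hl, app_nth1; auto.
    pose proof (flat_len Ls J0 m). lia.
  - destruct (flat_prefix Ls J0 n m ltac:(lia)) as [l Hl]. rewrite Hl, app_nth1; auto.
Qed.

Lemma flat_In {d} Ls J0 n y j : In (Some (y, j)) (@flat d Ls J0 n) -> (J0 <= j)%nat /\ In y (Ls j).
Proof.
  induction n; simpl.
  - unfold blk. intros [H|H]; [discriminate|]. apply in_map_iff in H. destruct H as [y' [E H]].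
    inversion E; subst. split; auto.
  - intros H. apply in_app_or in H. destruct H as [H|H]; auto.
    unfold blk in H. destruct H as [H|H]; [discriminate|]. apply in_map_iff in H. destruct H as [y' [E H]].
    inversion E; subst. split; auto. lia.
Qed.

Lemma flat_cover {d} Ls J0 y j : (J0 <= j)%nat -> In y (Ls j) ->
  exists m, nth m (@flat d Ls J0 m) None = Some (y, j).
Proof.
  intros Hj Hy. assert (Hin : In (Some (y, j)) (flat Ls J0 (j - J0))).
  { destruct (j - J0)%nat eqn:E.
    - simpl. unfold blk. right. apply in_map_iff. exists y. assert (j = J0) by lia. subst. auto.
    - simpl. apply in_or_app. right. unfold blk. right. apply in_map_iff. exists y.
      assert (j = (J0 + S n)%nat) by lia. rewrite <- H. auto. }
  destruct (In_nth _ _ None Hin) as [m [Hm Hn]]. exists m. rewrite flat_stable with (n := (j - J0)%nat); auto.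
Qed.

Definition fsum {T} (g : T -> R) (l : list T) : R := fold_right (fun o acc => g o + acc) 0 l.

Lemma fsum_app {T} g (l l' : list T) : fsum g (l ++ l') = fsum g l + fsum g l'.
Proof. induction l; simpl; [lra|]. unfold fsum in *; simpl. rewrite IHl. ring. Qed.

Lemma fsum_nonneg {T} g (l : list T) : (forall o, 0 <= g o) -> 0 <= fsum g l.
Proof. intros H. induction l; simpl; [lra|]. specialize (H a). unfold fsum in *; simpl. lra. Qed.

Lemma sum_zero f M : (forall n, f n = 0) -> sum_f_R0 f M = 0.
Proof. intros H. induction M; simpl; rewrite H; [lra|]. rewrite IHM; lra. Qed.

Lemma sum_nth_le {T} (g : option T -> R) : (forall o, 0 <= g o) -> g None = 0 ->
  forall l M, sum_f_R0 (fun m => g (nth m l None)) M <= fsum g l.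
Proof.
  intros Hg H0. induction l; intros M.
  - rewrite sum_zero. { simpl; lra. } intros n. destruct n; simpl; auto.
  - destruct M. { simpl. pose proof (fsum_nonneg g l Hg). unfold fsum in *; simpl. lra. }
    rewrite decomp_sum by lia. simpl pred. change (fsum g (a::l)) with (g a + fsum g l).
    specialize (IHl M). simpl. lra.
Qed.

Lemma fsum_flat {d} (g : option (Rd d * nat) -> R) Ls J0 n :
  fsum g (flat Ls J0 n) = sum_f_R0 (fun k => fsum g (blk Ls (J0 + k))) n.
Proof.
  induction n; simpl. { rewrite Nat.add_0_r; auto. } rewrite fsum_app, IHn. auto.
Qed.

Lemma fsum_blk {d} (w : nat -> R) Ls j :
  fsum (fun o : option (Rd d * nat) => match o with Some (_, j) => w j | None => 0 end) (blk Ls j)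
  = INR (length (Ls j)) * w j.
Proof.
  unfold blk, fsum. induction (Ls j). { simpl; lra. }
  change (length (a :: l)) with (S (length l)). rewrite S_INR. cbn [map fold_right] in *. lra.
Qed.

Lemma pw0 t : pw 0 t = 0.
Proof. unfold pw. destruct (Rle_dec 0 0); lra. Qed.

Lemma cover_lemma d (E : Rd d -> Prop) (Ls : nat -> list (Rd d)) t a b A R0 :
  0 < t -> 0 < b -> a < t * b -> 0 <= A -> 0 < R0 ->
  (forall j, INR (length (Ls j)) <= A * Rpower 2 (a * INR j)) ->
  (forall x, E x -> forall J, exists j, (J <= j)%nat /\ exists y, In y (Ls j) /\
        forall m, Rabs (x m - y m) <= R0 * Rpower 2 (- (b * INR j))) ->
  H_null t E.
Proof.
  intros Ht Hb Hab HA HR Hlen Hhit delta eps Hd He.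
  pose (rho := fun j : nat => R0 * Rpower 2 (- (b * INR j))).
  pose (rr := fun j : nat => sqrt (INR d) * (2 * rho j)).
  pose (Kc := 2 * R0 * (sqrt (INR d) + 1)).
  assert (HKc : 0 < Kc) by (unfold Kc; pose proof (sqrt_pos (INR d)); nra).
  pose (q := Rpower 2 (a - t * b)).
  assert (Hq1 : q < 1). { unfold q. rewrite <- (Rpower_O 2) by lra. apply Rpower_lt; lra. }
  assert (Hq0 : 0 < q) by apply Rpower_pos.
  pose (qb := Rpower 2 (- b)).
  assert (Hqb1 : qb < 1). { unfold qb. rewrite <- (Rpower_O 2) by lra. apply Rpower_lt; lra. }
  assert (Hqb0 : 0 < qb) by apply Rpower_pos.
  assert (Hrho : forall j, 0 < rho j) by (intros; unfold rho; pose proof (Rpower_pos 2 (- (b * INR j))); nra).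
  assert (Hrr0 : forall j, 0 <= rr j) by (intros; unfold rr; pose proof (sqrt_pos (INR d)); pose proof (Hrho j); nra).
  assert (Hrr : forall j, rr j <= Kc * qb ^ j).
  { intros j. unfold rr, Kc, qb, rho. rewrite <- p2_pow. replace (- b * INR j) with (- (b * INR j)) by ring.
    pose proof (sqrt_pos (INR d)). pose proof (Rpower_pos 2 (- (b * INR j))). nra. }
  pose (A' := A * Rpower Kc t).
  assert (HA' : 0 <= A') by (unfold A'; pose proof (Rpower_pos Kc t); nra).
  assert (Hlev : forall j, INR (length (Ls j)) * pw (rr j) t <= A' * q ^ j).
  { intros j. assert (pw (rr j) t <= Rpower Kc t * Rpower 2 (- (b * INR j) * t)).
    { eapply Rle_trans. apply (pw_mono _ (Kc * qb ^ j)); auto.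
      rewrite pw_pos by (pose proof (pow_lt qb j Hqb0); nra).
      rewrite <- Rpower_mult_distr by (auto; apply pow_lt; auto).
      unfold qb. rewrite <- p2_pow, Rpower_mult. replace (- b * INR j * t) with (- (b * INR j) * t) by ring. lra. }
    unfold A', q. rewrite <- p2_pow.
    assert (Rpower 2 ((a - t * b) * INR j) = Rpower 2 (a * INR j) * Rpower 2 (- (b * INR j) * t)).
    { rewrite <- p2_plus. f_equal. ring. }
    rewrite H0. pose proof (pw_nonneg (rr j) t). pose proof (pos_INR (length (Ls j))).
    pose proof (Hlen j). pose proof (Rpower_pos Kc t). pose proof (Rpower_pos 2 (a * INR j)).
    pose proof (Rpower_pos 2 (- (b * INR j) * t)).
    apply Rle_trans with (A * Rpower 2 (a * INR j) * (Rpower Kc t * Rpower 2 (- (b * INR j) * t))).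
    { apply Rmult_le_compat; auto. }
    right; ring. }
  destruct (pow_lt_1_zero qb ltac:(rewrite Rabs_right; lra) (delta / Kc) ltac:(apply Rdiv_lt_0_compat; lra)) as [J1 HJ1].
  destruct (pow_lt_1_zero q ltac:(rewrite Rabs_right; lra) (eps * (1 - q) / (A' + 1)) ltac:(apply Rdiv_lt_0_compat; nra)) as [J2 HJ2].
  pose (J0 := Nat.max J1 J2).
  exists (fun m x => match nth m (flat Ls J0 m) None with
                     | Some (y, j) => forall i, Rabs (x i - y i) <= rho j
                     | None => False end).
  exists (fun m => match nth m (flat Ls J0 m) None with Some (_, j) => rr j | None => 0 end).
  split; [|split; [|split]].
  - intros x Hx. destruct (Hhit x Hx J0) as [j [Hj [y [Hy Hc]]]].
    destruct (flat_cover Ls J0 y j Hj Hy) as [m Hm]. exists m. rewrite Hm. auto.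
  - intros m. destruct (nth m (flat Ls J0 m) None) as [[y j]|] eqn:Hn; [|lra].
    assert (Hin : In (Some (y, j)) (flat Ls J0 m)).
    { rewrite <- Hn. apply nth_In. pose proof (flat_len Ls J0 m). lia. }
    apply flat_In in Hin. destruct Hin as [Hj _]. split; auto.
    specialize (HJ1 j ltac:(unfold J0 in Hj; lia)). rewrite Rabs_right in HJ1 by (left; apply pow_lt; auto).
    specialize (Hrr j). apply (Rmult_lt_compat_l Kc) in HJ1; auto.
    replace (Kc * (delta / Kc)) with delta in HJ1 by (field; lra). lra.
  - intros m x x'. destruct (nth m (flat Ls J0 m) None) as [[y j]|]; [|tauto].
    intros H1 H2. unfold rr. apply dist_cube. pose proof (Hrho j); lra.
    intros i. specialize (H1 i). specialize (H2 i).
    replace (x i - x' i) with ((x i - y i) - (x' i - y i)) by ring.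
    eapply Rle_trans. apply Rabs_triang. rewrite Rabs_Ropp. lra.
  - intros M.
    pose (g := fun o : option (Rd d * nat) => match o with Some (_, j) => pw (rr j) t | None => 0 end).
    assert (Hg0 : forall o, 0 <= g o) by (intros [[y j]|]; simpl; [apply pw_nonneg|lra]).
    rewrite (sum_eq _ (fun m => g (nth m (flat Ls J0 M) None))).
    2:{ intros m Hm. rewrite <- (flat_stable Ls J0 M m).
        - unfold g. destruct (nth m (flat Ls J0 m) None) as [[y j]|]; auto. apply pw0.
        - pose proof (flat_len Ls J0 M). lia. }
    eapply Rle_trans. apply sum_nth_le; auto.
    unfold g. rewrite fsum_flat.
    rewrite (sum_eq _ (fun k => INR (length (Ls (J0 + k)%nat)) * pw (rr (J0 + k)%nat) t)).
    2:{ intros k _. apply (fsum_blk (fun j => pw (rr j) t)). }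
    eapply Rle_trans. apply sum_Rle. intros k _. apply Hlev.
    rewrite (sum_eq _ (fun k => q ^ k * (A' * q ^ J0))).
    2:{ intros k _. rewrite pow_add. ring. }
    rewrite <- scal_sum, tech3 by lra.
    specialize (HJ2 J0 ltac:(unfold J0; lia)). rewrite Rabs_right in HJ2 by (left; apply pow_lt; auto).
    pose proof (pow_lt q (S M) Hq0). pose proof (pow_lt q J0 Hq0).
    assert (Hx : (1 - q ^ S M) / (1 - q) <= 1 / (1 - q)).
    { unfold Rdiv. apply Rmult_le_compat_r. left; apply Rinv_0_lt_compat; lra. lra. }
    assert (Hy : A' * q ^ J0 * (1 / (1 - q)) <= eps).
    { apply (Rmult_lt_compat_l (A' + 1)) in HJ2; [|lra].
      replace ((A' + 1) * (eps * (1 - q) / (A' + 1))) with (eps * (1 - q)) in HJ2 by (field; lra).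
      apply (Rmult_le_reg_r (1 - q)); [lra|]. replace (A' * q ^ J0 * (1 / (1 - q)) * (1 - q)) with (A' * q ^ J0) by (field; lra).
      nra. }
    eapply Rle_trans; [|apply Hy]. apply Rmult_le_compat_l; [nra|]. lra.
Qed.

Lemma max_list {T} (P : T -> Prop) (K : nat) :
  (forall L, NoDup L -> Forall P L -> (length L <= K)%nat) ->
  exists L, NoDup L /\ Forall P L /\ forall a, P a -> In a L.
Proof.
  intros HK.
  assert (H : forall n L, NoDup L -> Forall P L -> (K - length L <= n)%nat ->
     exists L, NoDup L /\ Forall P L /\ forall a, P a -> In a L).
  { induction n; intros L HL HF Hn.
    - exists L. repeat split; auto. intros a Ha. apply NNPP. intros Hna.
      assert (length (a :: L) <= K)%nat by (apply HK; constructor; auto).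
      simpl in H. lia.
    - destruct (classic (exists a, P a /\ ~ In a L)) as [[a [Ha Hna]]|Hno].
      + assert (length (a :: L) <= K)%nat by (apply HK; constructor; auto).
        apply (IHn (a :: L)); try constructor; auto. simpl in *. lia.
      + exists L. repeat split; auto. intros a Ha. apply NNPP. intros Hna. apply Hno; eauto. }
  apply (H K nil); auto. constructor. simpl; lia.
Qed.

Lemma count_psum d (c : wseq d) s r j T L : 0 < r -> 0 <= T ->
  Forall (fun ik => T <= Cmod (c (fst ik) j (snd ik))) L ->
  INR (length L) * pw (T * Rpower 2 ((s - INR d / r) * INR j)) r <= level_psum c s r j L.
Proof.
  intros Hr HT. induction L as [|a L IH]; intros HF. { simpl; lra. }
  inversion HF; subst. specialize (IH H2). change (length (a :: L)) with (S (length L)).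
  rewrite S_INR. unfold level_psum; fold (level_psum c s r j L). simpl fold_right.
  unfold level_psum in IH.
  assert (pw (T * Rpower 2 ((s - INR d / r) * INR j)) r <= pw (Cmod (c (fst a) j (snd a)) * Rpower 2 ((s - INR d / r) * INR j)) r).
  { apply pw_mono; auto. pose proof (Rpower_pos 2 ((s - INR d / r) * INR j)). split; nra. }
  lra.
Qed.

Lemma sup_exists (P : R -> Prop) : exists v, is_sup_Rbar P v.
Proof.
  destruct (classic (exists g, P g)) as [Hne|Hemp].
  - destruct (classic (exists b, forall g, P g -> g <= b)) as [[b Hb]|Hunb].
    + destruct (completeness P (ex_intro _ b Hb) Hne) as [m [Hm1 Hm2]].
      exists (Finite m). split.
      * intros g Hg. simpl. apply Hm1; auto.
      * intros w Hw. destruct w as [w| |].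
        -- simpl. apply Hm2. intros g Hg. specialize (Hw g Hg). simpl in Hw. auto.
        -- simpl; auto.
        -- exfalso. destruct Hne as [g Hg]. specialize (Hw g Hg). simpl in Hw. auto.
    + exists p_infty. split. { intros; simpl; auto. }
      intros w Hw. destruct w as [w| |].
      * simpl. apply Hunb. exists w. intros g Hg. specialize (Hw g Hg). simpl in Hw. auto.
      * simpl; auto.
      * exfalso. destruct Hne as [g Hg]. specialize (Hw g Hg). simpl in Hw. auto.
  - exists m_infty. split.
    + intros g Hg. exfalso. eauto.
    + intros; simpl; auto.
Qed.

Lemma inf_exists (S : R -> Prop) beta :
  (forall t, S t -> 0 < t) -> (forall t, beta < t -> S t) ->
  exists D, is_inf_Rbar S D /\ Rbar_le D (Finite beta).
Proof.
  intros Hpos Hall.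
  pose (S' := fun u => S (- u)).
  assert (Hb : bound S'). { exists 0. intros u Hu. apply Hpos in Hu. lra. }
  assert (Hne : exists u, S' u). { exists (- (beta + 1)). unfold S'. rewrite Ropp_involutive. apply Hall. lra. }
  destruct (completeness S' Hb Hne) as [m [Hm1 Hm2]].
  exists (Finite (- m)). split; [split|].
  - intros g Hg. simpl. assert (S' (- g)) by (unfold S'; rewrite Ropp_involutive; auto).
    apply Hm1 in H. lra.
  - intros w Hw. destruct w as [w| |]; simpl; auto.
    + assert (m <= - w). { apply Hm2. intros u Hu. specialize (Hw _ Hu). simpl in Hw. lra. }
      lra.
    + apply (Hw (beta + 1)). apply Hall; lra.
  - simpl. destruct (Rle_or_lt (- m) beta) as [|H]; auto. exfalso.
    assert (S' (- ((beta + - m) / 2))). { unfold S'. rewrite Ropp_involutive. apply Hall. lra. }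
    apply Hm1 in H0. lra.
Qed.

Lemma hits d N (psi : wavelets d) (c : wseq d) (gamma g1 : R) x :
  g1 < gamma ->
  (forall v, is_div_exp N psi c x v -> Rbar_le (Finite gamma) v) ->
  forall J, exists j, (J <= j)%nat /\ exists i k, (i < N)%nat /\
     Rpower 2 (g1 * INR j) <= Cmod (c i j k) * Cmod (wav psi i j k x).
Proof.
  intros Hg HE J.
  destruct (sup_exists (fun g => in_D N psi c g x)) as [v Hv].
  assert (Hex : exists g, in_D N psi c g x /\ g1 < g).
  { apply NNPP. intros Hno. assert (Rbar_le v (Finite g1)).
    { apply (sup_le _ v g1 Hv). intros g Hgd. destruct (Rle_or_lt g g1); auto. exfalso; eauto. }
    specialize (HE v Hv). destruct v; simpl in *; auto; lra. }
  destruct Hex as [g [[C [iN [jN [kN [HC [Hi [Hj Hge]]]]]]] Hgg]].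
  destruct (p2_grow (g - g1) (/ C) ltac:(lra)) as [J' HJ'].
  destruct (Hj (Nat.max J J')) as [n0 Hn0]. specialize (Hn0 n0 (le_n _)).
  exists (jN n0). split; [lia|]. exists (iN n0), (kN n0). split; auto.
  specialize (Hge n0). rewrite Cmod_mult in Hge. specialize (HJ' (jN n0) ltac:(lia)).
  assert (Hs : Rpower 2 (g * INR (jN n0)) = Rpower 2 ((g - g1) * INR (jN n0)) * Rpower 2 (g1 * INR (jN n0))).
  { rewrite <- p2_plus. f_equal; ring. }
  rewrite Hs in Hge. pose proof (Rpower_pos 2 (g1 * INR (jN n0))).
  assert (1 < C * Rpower 2 ((g - g1) * INR (jN n0))).
  { apply (Rmult_lt_compat_l C) in HJ'; auto. rewrite Rinv_r in HJ'; lra. }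
  nra.
Qed.

Lemma INR_le_pow2 n : INR n <= 2 ^ n.
Proof.
  induction n. { simpl; lra. } rewrite S_INR. simpl.
  assert (1 <= 2 ^ n) by (apply pow_R1_Rle; lra). lra.
Qed.

Lemma p2_INR n : Rpower 2 (INR n) = 2 ^ n.
Proof. apply Rpower_pow; lra. Qed.

Lemma localize d (psi : wavelets d) N (c : wseq d) K0 a0 g1 eta (n : nat) Cn i j k x :
  0 < K0 -> (0 < n)%nat ->
  (forall i (y : Rd d), (i < N)%nat -> Cmod (psi i y) <= Cn / (1 + Rd_norm y) ^ n) ->
  (i < N)%nat ->
  Cmod (c i j k) <= K0 * Rpower 2 (a0 * INR j) ->
  K0 * Rabs Cn < Rpower 2 ((INR n * eta - (a0 - g1)) * INR j) ->
  Rpower 2 (g1 * INR j) <= Cmod (c i j k) * Cmod (wav psi i j k x) ->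
  Rd_norm (fun m => 2 ^ j * x m - IZR (k m)) < Rpower 2 (eta * INR j).
Proof.
  intros HK Hn Hdec Hi Hc HJ Hhit.
  set (Y := fun m => 2 ^ j * x m - IZR (k m)) in *.
  destruct (Rlt_or_le (Rd_norm Y) (Rpower 2 (eta * INR j))) as [|HY]; auto. exfalso.
  unfold wav in Hhit. fold Y in Hhit.
  pose proof (Hdec i Y Hi) as Hp. set (P := Rpower 2 (eta * INR j)) in *.
  assert (HP : 0 < P) by apply Rpower_pos.
  assert (HPn : P ^ n = Rpower 2 (INR n * eta * INR j)).
  { unfold P. rewrite <- Rpower_pow by apply Rpower_pos. rewrite Rpower_mult. f_equal. ring. }
  assert (Hle : P ^ n <= (1 + Rd_norm Y) ^ n).
  { apply pow_incr. lra. }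
  pose proof (pow_lt P n HP).
  pose proof (Cmod_nonneg (psi i Y)). pose proof (Cmod_nonneg (c i j k)).
  assert (Hpsi : Cmod (psi i Y) <= Rabs Cn / P ^ n).
  { eapply Rle_trans; [apply Hp|]. assert (0 <= Cn).
    { destruct (Rle_or_lt 0 Cn); auto. assert (Cn / (1 + Rd_norm Y) ^ n < 0).
      { assert (0 < / (1 + Rd_norm Y) ^ n) by (apply Rinv_0_lt_compat; lra). unfold Rdiv. nra. }
      lra. }
    rewrite Rabs_right by lra. unfold Rdiv. apply Rmult_le_compat_l; auto.
    apply Rinv_le_contravar; auto. }
  assert (H3 : Rpower 2 (g1 * INR j) <= K0 * Rpower 2 (a0 * INR j) * (Rabs Cn / P ^ n)).
  { eapply Rle_trans; [apply Hhit|]. apply Rmult_le_compat; auto. }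
  assert (H4 : Rpower 2 ((INR n * eta - (a0 - g1)) * INR j) * Rpower 2 (a0 * INR j) = P ^ n * Rpower 2 (g1 * INR j)).
  { rewrite HPn, <- !p2_plus. f_equal. ring. }
  pose proof (Rpower_pos 2 (a0 * INR j)).
  assert (Rpower 2 (g1 * INR j) * P ^ n <= K0 * Rpower 2 (a0 * INR j) * Rabs Cn).
  { apply (Rmult_le_compat_r (P ^ n)) in H3; [|lra]. unfold Rdiv in H3.
    replace (K0 * Rpower 2 (a0 * INR j) * (Rabs Cn * / P ^ n) * P ^ n) with (K0 * Rpower 2 (a0 * INR j) * Rabs Cn) in H3 by (field; lra).
    auto. }
  nra.
Qed.

Lemma finite_case d N (psi : wavelets d) s r q (c : wseq d) gamma t :
  (1 <= N)%nat -> bounded_wavelets N psi -> fast_decay N psi -> 0 < r -> ext_pos q ->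
  in_besov N s (ext_fin r) q c -> gamma <= - s + INR d / r ->
  INR d - s * r - gamma * r < t ->
  H_null t (fun x : Rd d => forall v, is_div_exp N psi c x v -> Rbar_le (Finite gamma) v).
Proof.
  intros HN [B HB] Hdec Hr Hq Hbes Hg Ht.
  set (beta := INR d - s * r - gamma * r) in *.
  assert (Hbeta : 0 <= beta).
  { unfold beta. assert (gamma * r <= (- s + INR d / r) * r) by (apply Rmult_le_compat_r; lra).
    replace ((- s + INR d / r) * r) with (INR d - s * r) in H by (field; lra). lra. }
  assert (Htpos : 0 < t) by lra.
  set (e1 := (t - beta) / (4 * r)).
  set (g1 := gamma - e1).
  set (eta := (t - beta) / (4 * t)).
  set (a0 := INR d / r - s).
  assert (He1 : 0 < e1) by (unfold e1; apply Rdiv_lt_0_compat; lra).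
  assert (Heta : 0 < eta) by (unfold eta; apply Rdiv_lt_0_compat; lra).
  assert (Heta1 : eta < 1).
  { unfold eta. apply (Rmult_lt_reg_r (4 * t)); [lra|]. unfold Rdiv. rewrite Rmult_assoc, Rinv_l by lra. lra. }
  assert (HDelta : 0 < a0 - g1) by (unfold a0, g1; lra).
  destruct (coef_bound d N s (ext_fin r) q c HN Hr Hq Hbes) as [K0 [HK0 Hc]].
  simpl d_over in Hc. fold a0 in Hc.
  destruct (nat_above (Rabs B + 1)) as [nB HnB].
  destruct (nat_above ((a0 - g1) / eta)) as [n0 Hn0].
  destruct (Hdec (S n0) ltac:(lia)) as [Cn HCn].
  destruct (besov_sum_bound d N s r q c Hq Hr Hbes) as [M' HM'].
  assert (HM0 : 0 <= M') by (specialize (HM' 0%nat nil (NoDup_nil _) (Forall_nil _)); simpl in HM'; lra).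
  assert (Hbw : forall i y, (i < N)%nat -> Cmod (psi i y) <= Rpower 2 (INR nB)).
  { intros i y Hi. rewrite p2_INR. pose proof (INR_le_pow2 nB). pose proof (Rle_abs B). specialize (HB i y Hi). lra. }
  set (T := fun j : nat => Rpower 2 (g1 * INR j - INR nB)).
  set (P := fun (j : nat) (ik : nat * Zd d) => (fst ik < N)%nat /\ T j <= Cmod (c (fst ik) j (snd ik))).
  set (ej := fun j : nat => g1 * INR j - INR nB + (s - INR d / r) * INR j).
  assert (Hcount : forall j L, NoDup L -> Forall (P j) L -> INR (length L) <= M' * Rpower 2 (- (ej j * r))).
  { intros j L HL HF.
    assert (H1 : INR (length L) * pw (T j * Rpower 2 ((s - INR d / r) * INR j)) r <= M').
    { assert (HF1 : Forall (fun ik => T j <= Cmod (c (fst ik) j (snd ik))) L).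
      { eapply Forall_impl; [|apply HF]. intros ik [_ H]; auto. }
      assert (HF2 : Forall (fun ik : nat * Zd d => (fst ik < N)%nat) L).
      { eapply Forall_impl; [|apply HF]. intros ik [H _]; auto. }
      pose proof (count_psum d c s r j (T j) L Hr ltac:(unfold T; apply Rlt_le, Rpower_pos) HF1).
      pose proof (HM' j L HL HF2). lra. }
    assert (H2 : pw (T j * Rpower 2 ((s - INR d / r) * INR j)) r = Rpower 2 (ej j * r)).
    { unfold T. rewrite <- p2_plus. rewrite pw_pos by apply Rpower_pos. rewrite Rpower_mult. reflexivity. }
    rewrite H2 in H1. pose proof (Rpower_pos 2 (ej j * r)).
    assert (Rpower 2 (ej j * r) * Rpower 2 (- (ej j * r)) = 1).
    { rewrite <- p2_plus. replace (ej j * r + - (ej j * r)) with 0 by ring. apply Rpower_O; lra. }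
    pose proof (Rpower_pos 2 (- (ej j * r))). pose proof (pos_INR (length L)).
    apply (Rmult_le_compat_r (Rpower 2 (- (ej j * r)))) in H1; [|lra]. nra. }
  assert (Hmax : forall j, exists L, NoDup L /\ Forall (P j) L /\ forall a, P j a -> In a L).
  { intros j. destruct (nat_above (M' * Rpower 2 (- (ej j * r)))) as [K HK].
    apply (max_list (P j) K). intros L HL HF. specialize (Hcount j L HL HF).
    apply INR_le. lra. }
  set (Lmax := fun j => proj1_sig (constructive_indefinite_description _ (Hmax j))).
  assert (HLmax : forall j, NoDup (Lmax j) /\ Forall (P j) (Lmax j) /\ forall a, P j a -> In a (Lmax j)).
  { intros j. unfold Lmax. destruct (constructive_indefinite_description _ (Hmax j)). simpl. auto. }
  set (Ls := fun j => map (fun ik : nat * Zd d => (fun m => IZR (snd ik m) / 2 ^ j) : Rd d) (Lmax j)).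
  set (n := S n0).
  apply (cover_lemma d _ Ls t (- (g1 + s - INR d / r) * r) (1 - eta) (M' * Rpower 2 (INR nB * r)) 1).
  - auto.
  - lra.
  - assert (E1 : - (g1 + s - INR d / r) * r = beta + (t - beta) / 4) by (unfold g1, e1, beta; field; lra).
    assert (E2 : t * (1 - eta) = t - (t - beta) / 4) by (unfold eta; field; lra). lra.
  - pose proof (Rpower_pos 2 (INR nB * r)). nra.
  - lra.
  - intros j. unfold Ls. rewrite length_map. destruct (HLmax j) as [H1 [H2 _]].
    eapply Rle_trans. apply Hcount; eauto. right. rewrite Rmult_assoc, <- p2_plus. f_equal. f_equal.
    unfold ej. ring.
  - intros x Hx J.
    assert (Hn : 0 < INR n * eta - (a0 - g1)).
    { assert (INR n0 <= INR n) by (apply le_INR; unfold n; lia).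
      apply (Rmult_lt_compat_r eta) in Hn0; auto. unfold Rdiv in Hn0.
      rewrite Rmult_assoc, Rinv_l in Hn0 by lra. nra. }
    destruct (p2_grow _ (K0 * Rabs Cn) Hn) as [J1 HJ1].
    destruct (hits d N psi c gamma g1 x ltac:(unfold g1; lra) Hx (Nat.max J J1)) as [j [Hj [i [k [Hi Hhit]]]]].
    exists j. split; [lia|].
    exists (fun m => IZR (k m) / 2 ^ j). split.
    + unfold Ls. apply in_map_iff. exists (i, k). split; [reflexivity|]. apply HLmax. unfold P; simpl. split; auto.
      unfold wav in Hhit. pose proof (Hbw i (fun m => 2 ^ j * x m - IZR (k m)) Hi).
      pose proof (Cmod_nonneg (c i j k)). pose proof (Cmod_nonneg (psi i (fun m => 2 ^ j * x m - IZR (k m)))).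
      assert (HT : T j * Rpower 2 (INR nB) = Rpower 2 (g1 * INR j)).
      { unfold T. rewrite <- p2_plus. f_equal. ring. }
      pose proof (Rpower_pos 2 (INR nB)).
      assert (Rpower 2 (g1 * INR j) <= Cmod (c i j k) * Rpower 2 (INR nB)).
      { eapply Rle_trans; [apply Hhit|]. apply Rmult_le_compat_l; auto. }
      nra.
    + intros m.
      pose proof (localize d psi N c K0 a0 g1 eta n Cn i j k x HK0 ltac:(unfold n; lia) HCn Hi (Hc i j k Hi) (HJ1 j ltac:(lia)) Hhit) as Hloc.
      pose proof (coord_le_norm d (fun m => 2 ^ j * x m - IZR (k m)) m) as Hco. simpl in Hco.
      assert (H2j : 0 < 2 ^ j) by (apply pow_lt; lra).
      replace (x m - IZR (k m) / 2 ^ j) with ((2 ^ j * x m - IZR (k m)) * / 2 ^ j) by (field; lra).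
      rewrite Rabs_mult, Rabs_inv, (Rabs_right (2 ^ j)) by lra.
      assert (Hp : Rpower 2 (eta * INR j) * / 2 ^ j = 1 * Rpower 2 (- ((1 - eta) * INR j))).
      { rewrite <- p2_INR, <- Rpower_Ropp, <- p2_plus. rewrite Rmult_1_l. f_equal. ring. }
      rewrite <- Hp. apply Rmult_le_compat_r. left; apply Rinv_0_lt_compat; lra. lra.
Qed.

Definition zrange (K : nat) : list Z := map (fun n => (Z.of_nat n - Z.of_nat K)%Z) (seq 0 (2 * K + 1)).
Definition fcons {d} (z : Z) (f : Zd d) : Zd (S d) := fun i => Fin.caseS' i (fun _ => Z) z f.
Fixpoint boxlist (d K : nat) : list (Zd d) :=
  match d with
  | O => (fun _ => 0%Z) :: nil
  | S d' => flat_map (fun z => map (@fcons d' z) (boxlist d' K)) (zrange K)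
  end.

Lemma length_flat_map_const {X Y} (f : X -> list Y) n (l : list X) :
  (forall x, length (f x) = n) -> length (flat_map f l) = (length l * n)%nat.
Proof. intros H. induction l; simpl; auto. rewrite length_app, H, IHl. auto. Qed.

Lemma boxlist_len d K : length (boxlist d K) = Nat.pow (2 * K + 1) d.
Proof.
  induction d; simpl; auto. rewrite (length_flat_map_const _ (Nat.pow (2 * K + 1) d)).
  - unfold zrange. rewrite length_map, length_seq. simpl. lia.
  - intros z. rewrite length_map. auto.
Qed.

Lemma boxlist_in d K (k : Zd d) : (forall m, (- Z.of_nat K <= k m <= Z.of_nat K)%Z) -> In k (boxlist d K).
Proof.
  revert k. induction d; intros k Hk; simpl.
  - left. apply functional_extensionality. intros m. inversion m.
  - apply in_flat_map. exists (k Fin.F1). split.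
    + unfold zrange. apply in_map_iff. exists (Z.to_nat (k Fin.F1 + Z.of_nat K)).
      specialize (Hk Fin.F1). split; [lia|]. apply in_seq. lia.
    + apply in_map_iff. exists (fun i => k (Fin.FS i)). split.
      * apply functional_extensionality. intros m. unfold fcons. pattern m. apply Fin.caseS'; simpl; auto.
      * apply IHd. intros m. apply Hk.
Qed.

Lemma infinite_case d (E : Rd d -> Prop) t : INR d < t -> H_null t E.
Proof.
  intros Ht. assert (Hd0 := pos_INR d).
  destruct (nat_above (INR d / (t - INR d))) as [B HB].
  assert (HBpos : 0 < INR B). { assert (0 <= INR d / (t - INR d)) by (unfold Rdiv; apply Rmult_le_pos; [lra|left; apply Rinv_0_lt_compat; lra]). lra. }
  assert (HBt : (INR B + 1) * INR d < t * INR B).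
  { apply (Rmult_lt_compat_r (t - INR d)) in HB; [|lra]. unfold Rdiv in HB.
    rewrite Rmult_assoc, Rinv_l in HB by lra. nra. }
  set (K := fun j : nat => Nat.pow 2 ((B + 1) * j)).
  set (Ls := fun j => map (fun k : Zd d => (fun m => IZR (k m) / 2 ^ (B * j)) : Rd d) (boxlist d (K j))).
  apply (cover_lemma d E Ls t ((INR B + 1) * INR d) (INR B) (3 ^ d) 1); try lra.
  - apply pow_le; lra.
  - intros j. unfold Ls. rewrite length_map, boxlist_len, pow_INR.
    assert (HK : INR (K j) = 2 ^ ((B + 1) * j)) by (unfold K; rewrite pow_INR; auto).
    assert (HK1 : 1 <= INR (K j)) by (rewrite HK; apply pow_R1_Rle; lra).
    rewrite plus_INR, mult_INR, HK. simpl (INR 2). simpl (INR 1).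
    rewrite <- HK.
    apply Rle_trans with ((3 * INR (K j)) ^ d). { apply pow_incr. lra. }
    rewrite Rpow_mult_distr. apply Rmult_le_compat_l. { apply pow_le; lra. }
    rewrite HK, <- pow_mult, <- p2_INR. right. f_equal. rewrite !mult_INR, plus_INR. simpl (INR 1). ring.
  - intros x _ J.
    destruct (p2_grow 1 (Rd_norm x + 1) ltac:(lra)) as [J1 HJ1].
    exists (Nat.max J J1). split; [lia|]. set (j := Nat.max J J1).
    specialize (HJ1 j ltac:(unfold j; lia)). rewrite Rmult_1_l, p2_INR in HJ1.
    set (P := 2 ^ (B * j)).
    assert (HP1 : 1 <= P) by (apply pow_R1_Rle; lra).
    set (k := fun m => (up (P * x m) - 1)%Z).
    assert (Hk : forall m, P * x m - 1 < IZR (k m) <= P * x m).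
    { intros m. unfold k. rewrite minus_IZR. destruct (archimed (P * x m)). lra. }
    exists (fun m => IZR (k m) / P). split.
    + unfold Ls. apply in_map_iff. exists k. split; [reflexivity|]. apply boxlist_in.
      intros m. pose proof (coord_le_norm d x m) as Hc. specialize (Hk m).
      assert (HKj : IZR (Z.of_nat (K j)) = P * 2 ^ j).
      { rewrite <- INR_IZR_INZ. unfold K. rewrite pow_INR. unfold P. rewrite <- pow_add.
        replace ((B + 1) * j)%nat with (B * j + j)%nat by lia. simpl (INR 2). reflexivity. }
      assert (Habs : Rabs (x m) <= 2 ^ j - 1) by lra.
      pose proof (Rle_abs (x m)) as Ha1. pose proof (Rle_abs (- x m)) as Ha2. rewrite Rabs_Ropp in Ha2.
      assert (HPj : 1 <= 2 ^ j) by (apply pow_R1_Rle; lra).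
      split; apply le_IZR; rewrite ?opp_IZR, HKj; nra.
    + intros m. specialize (Hk m).
      assert (HP0 : 0 < P) by lra.
      replace (x m - IZR (k m) / P) with ((P * x m - IZR (k m)) * / P) by (field; lra).
      assert (Hp : 1 * Rpower 2 (- (INR B * INR j)) = / P).
      { rewrite Rmult_1_l, Rpower_Ropp, <- mult_INR, p2_INR. auto. }
      rewrite Hp, Rabs_mult, Rabs_right by lra. rewrite Rabs_right by (left; apply Rinv_0_lt_compat; lra).
      assert (0 < / P) by (apply Rinv_0_lt_compat; lra). nra.
Qed.

Theorem mainTheorem2 (d N : nat) (psi : wavelets d) (s : R) (p q : ext) (c : wseq d) :
  (1 <= d)%nat -> (1 <= N)%nat ->
  bounded_wavelets N psi -> fast_decay N psi ->
  ext_pos p -> ext_pos q ->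
  in_besov N s p q c ->
  (forall (x : Rd d) (v : Rbar), is_div_exp N psi c x v ->
     Rbar_le v (Finite (d_over d p - s))) /\
  (forall gamma : R, - s <= gamma <= - s + d_over d p ->
     exists D : Rbar,
       is_Hdim (fun x : Rd d => forall v, is_div_exp N psi c x v -> Rbar_le (Finite gamma) v) D /\
       Rbar_le D (Finite (dim_bound d s p gamma))).
Proof.
  intros Hd HN Hbw Hfd Hp Hq Hbes. split.
  - intros x v Hv. destruct (coef_bound d N s p q c HN Hp Hq Hbes) as [K0 [HK0 Hc]].
    destruct Hbw as [B HB].
    apply (sup_le _ v _ Hv). intros g Hg.
    apply (inD_bound d N psi c (d_over d p - s) K0 (Rabs B) g x); auto.
    + apply Rabs_pos.
    + intros i y Hi. pose proof (HB i y Hi). pose proof (Rle_abs B). lra.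
  - intros gamma [Hg1 Hg2]. unfold is_Hdim.
    assert (Hbeta : 0 <= dim_bound d s p gamma).
    { destruct p as [r|]; simpl in *.
      - assert (gamma * r <= (- s + INR d / r) * r) by (apply Rmult_le_compat_r; lra).
        replace ((- s + INR d / r) * r) with (INR d - s * r) in H by (field; lra). lra.
      - apply pos_INR. }
    apply inf_exists.
    + intros t [Ht _]; auto.
    + intros t Ht. split; [lra|].
      destruct p as [r|]; simpl in *.
      * apply (finite_case d N psi s r q c gamma t); auto.
      * apply infinite_case; auto.
Qed.
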